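(* Let $\lambda>0$, $\xi>0$, $v_2<v_1$ with either $v_2<0<v_1$ or $0<v_2<v_1$, and let $\tilde X(t)$ be the position of the extended telegraph process driven by GCPs with parameter $\lambda$ with Poissonian resets to the origin at rate $\xi$. Write $E_j[\cdot]=E[\cdot\,|\,\tilde X(0)=0,V(0)=v_j]$ and $G_\xi(t)=\Gamma[0,\frac\xi\lambda,\frac\xi\lambda(1+\lambda t)]$. Then for all $t>0$ and $j=1,2$, $$ E_j[\tilde X(t)]=(1-e^{-\xi t})\Big(\frac{v_1+v_2}{2\xi}+\frac{v_j-v_{3-j}}{2\lambda}\Big)-\frac{\xi e^{\xi/\lambda}(v_j-v_{3-j})}{2\lambda^2}G_\xi(t)+\frac{te^{-\xi t}(v_j-v_{3-j})}{2(1+\lambda t)}, $$ $$ \begin{aligned} E_j[\tilde X^2(t)]&=(1-e^{-\xi t})\Big[\frac{2(v_1^2+v_1v_2+v_2^2)}{3\xi^2}+\frac{2v_j^2-v_1v_2-v_{3-j}^2}{3\lambda}\Big(\frac1\xi-\frac1\lambda\Big)\Big]\\ &\quad-te^{-\xi t}\Big[\frac{2(v_1^2+v_1v_2+v_2^2)}{3\xi}+\frac{2v_j^2-v_1v_2-v_{3-j}^2}{3\lambda(1+\lambda t)}\Big]+\frac{\xi e^{\xi/\lambda}(2v_j^2-v_1v_2-v_{3-j}^2)}{3\lambda^3}G_\xi(t). \end{aligned} $$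
   Context: GCP with intensity $\lambda>0$: a Poisson process whose rate is random, exponentially distributed with mean $\lambda$; increments satisfy $P\{\tilde N_\lambda(t+s)-\tilde N_\lambda(t)=k\}=\frac{1}{1+\lambda s}(\frac{\lambda s}{1+\lambda s})^k$. The process: a particle starts at the origin with velocity $V(0)=v_j$ ($v_1,v_2\ne0$, $v_2<v_1$), moves with velocity alternating between $v_1$ and $v_2$, the periods at velocity $v_1$ and at $v_2$ being governed by two independent GCPs of intensity $\lambda$; additionally it is instantaneously reset to the origin at the epochs of an independent Poisson process of rate $\xi$, restarting afresh with velocity $v_j$. Equivalently the law of $\tilde X(t)$ given $V(0)=v_j$ has generalized density $\tilde p(x,t|v_j)=e^{-\xi t}p(x,t|v_j)+\xi\int_0^te^{-\xi s}p(x,s|v_j)ds$ with $p(x,t|v_j)=\frac{\delta(x-v_jt)}{1+\lambda t}+\mathbb 1_{\{v_2t<x<v_1t\}}\frac{\lambda}{(v_1-v_2)(1+\lambda t)}$ ($\delta$ Dirac delta). $\Gamma(a,z_0,z_1)=\int_{z_0}^{z_1}s^{a-1}e^{-s}ds$. *)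

(* Defs.v *)
From Stdlib Require Import Reals.
From Coquelicot Require Import Coquelicot.
Open Scope R_scope.

Definition vel (v1 v2 : R) (j : nat) : R := if Nat.eqb j 1 then v1 else v2.

Definition Gamma3 (a z0 z1 : R) : R :=
  RInt (fun s => Rpower s (a - 1) * exp (- s)) z0 z1.

(* Integral of f against the generalized density (without resetting)
   p(x,s|v_j) = delta(x - v_j s)/(1+lam s)
              + 1_{v2 s < x < v1 s} lam/((v1-v2)(1+lam s)),
   the Dirac part being integrated out literally as f(v_j s). *)
Definition p_int (lam v1 v2 : R) (j : nat) (f : R -> R) (s : R) : R :=
  f (vel v1 v2 j * s) / (1 + lam * s)
  + lam / ((v1 - v2) * (1 + lam * s)) * RInt f (v2 * s) (v1 * s).

(* Integral of f against the law of X~(t) given V(0) = v_j, i.e. against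
   p~(x,t|v_j) = e^{-xi t} p(x,t|v_j) + xi int_0^t e^{-xi s} p(x,s|v_j) ds.
   So E_j[f(X~(t))] = ptilde_int lam xi v1 v2 j f t. *)
Definition ptilde_int (lam xi v1 v2 : R) (j : nat) (f : R -> R) (t : R) : R :=
  exp (- xi * t) * p_int lam v1 v2 j f t
  + xi * RInt (fun s => exp (- xi * s) * p_int lam v1 v2 j f s) 0 t.

Definition EX (lam xi v1 v2 : R) (j : nat) (t : R) : R :=
  ptilde_int lam xi v1 v2 j (fun x => x) t.
Definition EX2 (lam xi v1 v2 : R) (j : nat) (t : R) : R :=
  ptilde_int lam xi v1 v2 j (fun x => x ^ 2) t.

Definition Gxi (lam xi t : R) : R :=
  Gamma3 0 (xi / lam) (xi / lam * (1 + lam * t)).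

(* Main.v *)
Require Import Defs.
From Stdlib Require Import Reals Lra.
From Coquelicot Require Import Coquelicot.
Open Scope R_scope.

Lemma gen (xi t : R) (g q F : R -> R) (B Gv : R) :
  0 < xi -> 0 < t ->
  is_RInt q 0 t Gv ->
  (forall u, 0 <= u <= t -> is_derive F u (xi * g u - B * q u)) ->
  (forall u, 0 <= u <= t -> continuous (fun u => xi * g u - B * q u) u) ->
  xi * RInt g 0 t = F t - F 0 + B * Gv.
Proof.
  intros Hxi Ht HG HF HC.
  assert (Hmm : Rmin 0 t = 0 /\ Rmax 0 t = t).
  { split; [apply Rmin_left | apply Rmax_right]; lra. }
  destruct Hmm as [Hmin Hmax].
  assert (H1 : is_RInt (fun u => xi * g u - B * q u) 0 t (minus (F t) (F 0))).
  { apply (is_RInt_derive (V:=R_CompleteNormedModule)); rewrite Hmin, Hmax; auto. }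
  assert (H2 := is_RInt_scal _ _ _ B _ HG).
  assert (H3 := is_RInt_plus _ _ _ _ _ _ H1 H2).
  assert (H4 := is_RInt_scal _ _ _ (/ xi) _ H3).
  assert (H5 : is_RInt g 0 t (scal (/ xi) (plus (minus (F t) (F 0)) (scal B Gv)))).
  { eapply is_RInt_ext; [| exact H4]. intros x _.
    unfold scal, plus, minus, opp; simpl; unfold mult, plus, opp; simpl. field. lra. }
  rewrite (is_RInt_unique _ _ _ _ H5).
  unfold scal, plus, minus, opp; simpl; unfold mult, plus, opp; simpl. field. lra.
Qed.
Lemma Gxi_int lam xi t : 0 < lam -> 0 < xi -> 0 < t ->
  is_RInt (fun y => lam * exp (- (xi / lam)) * (exp (- xi * y) / (1 + lam * y))) 0 t (Gxi lam xi t).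
Proof.
  intros Hl Hx Ht.
  set (h := fun s => Rpower s (0 - 1) * exp (- s)).
  set (g := fun y => xi / lam * (1 + lam * y)).
  assert (Hpos : forall y, 0 <= y -> 0 < g y).
  { intros y Hy. unfold g. apply Rmult_lt_0_compat. apply Rdiv_lt_0_compat; lra. nra. }
  assert (Hmm : Rmin 0 t = 0 /\ Rmax 0 t = t).
  { split; [apply Rmin_left | apply Rmax_right]; lra. }
  destruct Hmm as [Hmin Hmax].
  assert (H := is_RInt_comp (V:=R_CompleteNormedModule) h g (fun _ => xi) 0 t).
  unfold Gxi, Gamma3.
  replace (xi / lam) with (g 0) at 1 by (unfold g; ring).
  replace (xi / lam * (1 + lam * t)) with (g t) by reflexivity.
  fold h.
  eapply is_RInt_ext; [| apply H].
  - rewrite Hmin, Hmax. intros y Hy. unfold h, g.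
    replace (0 - 1) with (- (1)) by ring. rewrite Rpower_Ropp, Rpower_1.
    2: { apply Hpos. lra. }
    replace (- (xi / lam * (1 + lam * y))) with (- (xi / lam) + - xi * y) by (field; lra).
    rewrite exp_plus. change (scal xi ?a) with (xi * a). change (xi * (/ (xi / lam * (1 + lam * y)) * (exp (- (xi / lam)) * exp (- xi * y))) = lam * exp (- (xi / lam)) * (exp (- xi * y) / (1 + lam * y))). field. split; nra.
  - rewrite Hmin, Hmax. intros x Hxr.
    apply (ex_derive_continuous (K:=R_AbsRing) (V:=R_NormedModule)). unfold h, Rpower. auto_derive. apply Hpos. lra.
  - rewrite Hmin, Hmax. intros x Hxr. split.
    + unfold g. auto_derive. auto. field. lra.
    + apply continuous_const.
Qed.
Lemma EX1_main lam xi v1 v2 vj vo t : 0 < lam -> 0 < xi -> 0 < t ->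
  ((vj = v1 /\ vo = v2) \/ (vj = v2 /\ vo = v1)) ->
  forall Gv, is_RInt (fun y => lam * exp (- (xi / lam)) * (exp (- xi * y) / (1 + lam * y))) 0 t Gv ->
  let m := fun s => (vj * s + lam * (v1 + v2) * s ^ 2 / 2) / (1 + lam * s) in
  exp (- xi * t) * m t + xi * RInt (fun s => exp (- xi * s) * m s) 0 t =
    (1 - exp (- xi * t)) * ((v1 + v2) / (2 * xi) + (vj - vo) / (2 * lam))
    - xi * exp (xi / lam) * (vj - vo) / (2 * lam ^ 2) * Gv
    + t * exp (- xi * t) * (vj - vo) / (2 * (1 + lam * t)).
Proof.
  intros Hl Hx Ht Hv Gv HG m.
  set (A := (v1 + v2) / (2 * xi) + (vj - vo) / (2 * lam)).
  set (B := - (xi * exp (xi / lam) * (vj - vo) / (2 * lam ^ 2))).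
  set (F := fun u => - exp (- xi * u) * m u - exp (- xi * u) * A
                     + (vj - vo) / 2 * u * exp (- xi * u) / (1 + lam * u)).
  rewrite (gen xi t (fun s => exp (- xi * s) * m s)
     (fun y => lam * exp (- (xi / lam)) * (exp (- xi * y) / (1 + lam * y))) F B Gv Hx Ht HG).
  - unfold F, m, B, A. rewrite Rmult_0_r, exp_0. field. repeat split; intro; nra.
  - intros u Hu. unfold F, m, B, A. auto_derive.
    + repeat split; intro; nra.
    + rewrite <- (Rinv_inv (exp (xi / lam))), <- exp_Ropp.
      assert (exp (- (xi / lam)) <> 0) by (apply Rgt_not_eq, exp_pos).
      destruct Hv as [[-> ->] | [-> ->]]; field; repeat split; intro; nra.
  - intros u Hu. apply (ex_derive_continuous (K:=R_AbsRing) (V:=R_NormedModule)).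
    unfold m. auto_derive. repeat split; intro; nra.
Qed.
Lemma EX2_main lam xi v1 v2 vj vo t : 0 < lam -> 0 < xi -> 0 < t ->
  ((vj = v1 /\ vo = v2) \/ (vj = v2 /\ vo = v1)) ->
  forall Gv, is_RInt (fun y => lam * exp (- (xi / lam)) * (exp (- xi * y) / (1 + lam * y))) 0 t Gv ->
  let m := fun s => ((vj * s) ^ 2 + lam * (v1 ^ 2 + v1 * v2 + v2 ^ 2) * s ^ 3 / 3) / (1 + lam * s) in
  exp (- xi * t) * m t + xi * RInt (fun s => exp (- xi * s) * m s) 0 t =
    (1 - exp (- xi * t)) *
      (2 * (v1 ^ 2 + v1 * v2 + v2 ^ 2) / (3 * xi ^ 2)
       + (2 * vj ^ 2 - v1 * v2 - vo ^ 2) / (3 * lam) * (1 / xi - 1 / lam))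
    - t * exp (- xi * t) *
      (2 * (v1 ^ 2 + v1 * v2 + v2 ^ 2) / (3 * xi)
       + (2 * vj ^ 2 - v1 * v2 - vo ^ 2) / (3 * lam * (1 + lam * t)))
    + xi * exp (xi / lam) * (2 * vj ^ 2 - v1 * v2 - vo ^ 2) / (3 * lam ^ 3)
      * Gv.
Proof.
  intros Hl Hx Ht Hv Gv HG m.
  set (X := 2 * (v1 ^ 2 + v1 * v2 + v2 ^ 2) / (3 * xi ^ 2)
       + (2 * vj ^ 2 - v1 * v2 - vo ^ 2) / (3 * lam) * (1 / xi - 1 / lam)).
  set (Y := 2 * (v1 ^ 2 + v1 * v2 + v2 ^ 2) / (3 * xi)).
  set (Z := (2 * vj ^ 2 - v1 * v2 - vo ^ 2) / (3 * lam)).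
  set (B := xi * exp (xi / lam) * (2 * vj ^ 2 - v1 * v2 - vo ^ 2) / (3 * lam ^ 3)).
  set (F := fun u => - exp (- xi * u) * m u - exp (- xi * u) * X
                     - u * exp (- xi * u) * (Y + Z / (1 + lam * u))).
  rewrite (gen xi t (fun s => exp (- xi * s) * m s)
     (fun y => lam * exp (- (xi / lam)) * (exp (- xi * y) / (1 + lam * y))) F B Gv Hx Ht HG).
  - unfold F, m, B, X, Y, Z. rewrite Rmult_0_r, exp_0. field. repeat split; intro; nra.
  - intros u Hu. unfold F, m, B, X, Y, Z. auto_derive.
    + repeat split; intro; nra.
    + rewrite <- (Rinv_inv (exp (xi / lam))), <- exp_Ropp.
      assert (exp (- (xi / lam)) <> 0) by (apply Rgt_not_eq, exp_pos).
      destruct Hv as [[-> ->] | [-> ->]]; field; repeat split; intro; nra.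
  - intros u Hu. apply (ex_derive_continuous (K:=R_AbsRing) (V:=R_NormedModule)).
    unfold m. auto_derive. repeat split; intro; nra.
Qed.

Lemma RInt_id a b : RInt (fun x => x) a b = (b ^ 2 - a ^ 2) / 2.
Proof.
  apply is_RInt_unique.
  replace ((b ^ 2 - a ^ 2) / 2) with (minus (b ^ 2 / 2) (a ^ 2 / 2))
    by (unfold minus, plus, opp; simpl; field).
  apply (is_RInt_derive (V:=R_CompleteNormedModule) (fun x => x ^ 2 / 2)).
  - intros x _. auto_derive; auto. field.
  - intros x _. apply (ex_derive_continuous (K:=R_AbsRing) (V:=R_NormedModule)).
    auto_derive. auto.
Qed.

Lemma RInt_sq a b : RInt (fun x => x ^ 2) a b = (b ^ 3 - a ^ 3) / 3.
Proof.
  apply is_RInt_unique.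
  replace ((b ^ 3 - a ^ 3) / 3) with (minus (b ^ 3 / 3) (a ^ 3 / 3))
    by (unfold minus, plus, opp; simpl; field).
  apply (is_RInt_derive (V:=R_CompleteNormedModule) (fun x => x ^ 3 / 3)).
  - intros x _. auto_derive; auto. field.
  - intros x _. apply (ex_derive_continuous (K:=R_AbsRing) (V:=R_NormedModule)).
    auto_derive. auto.
Qed.

Theorem theorem5 (lam xi v1 v2 : R) (j : nat) (t : R) :
  0 < lam -> 0 < xi -> v2 < v1 ->
  (v2 < 0 < v1 \/ 0 < v2 < v1) ->
  (j = 1%nat \/ j = 2%nat) -> 0 < t ->
  let vj := vel v1 v2 j in
  let vo := vel v1 v2 (3 - j) in
  EX lam xi v1 v2 j t =
    (1 - exp (- xi * t)) * ((v1 + v2) / (2 * xi) + (vj - vo) / (2 * lam))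
    - xi * exp (xi / lam) * (vj - vo) / (2 * lam ^ 2) * Gxi lam xi t
    + t * exp (- xi * t) * (vj - vo) / (2 * (1 + lam * t))
  /\
  EX2 lam xi v1 v2 j t =
    (1 - exp (- xi * t)) *
      (2 * (v1 ^ 2 + v1 * v2 + v2 ^ 2) / (3 * xi ^ 2)
       + (2 * vj ^ 2 - v1 * v2 - vo ^ 2) / (3 * lam) * (1 / xi - 1 / lam))
    - t * exp (- xi * t) *
      (2 * (v1 ^ 2 + v1 * v2 + v2 ^ 2) / (3 * xi)
       + (2 * vj ^ 2 - v1 * v2 - vo ^ 2) / (3 * lam * (1 + lam * t)))
    + xi * exp (xi / lam) * (2 * vj ^ 2 - v1 * v2 - vo ^ 2) / (3 * lam ^ 3)
      * Gxi lam xi t.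
Proof.
  intros Hl Hx H12 _ Hj Ht vj vo.
  assert (Hv : (vj = v1 /\ vo = v2) \/ (vj = v2 /\ vo = v1)).
  { unfold vj, vo. destruct Hj as [-> | ->]; simpl; auto. }
  assert (HG := Gxi_int lam xi t Hl Hx Ht).
  assert (Hmm : Rmin 0 t = 0 /\ Rmax 0 t = t).
  { split; [apply Rmin_left | apply Rmax_right]; lra. }
  destruct Hmm as [Hmin Hmax].
  split.
  - rewrite <- (EX1_main lam xi v1 v2 vj vo t Hl Hx Ht Hv _ HG).
    unfold EX, ptilde_int. fold vj.
    assert (Hp : forall s, 0 <= s -> p_int lam v1 v2 j (fun x => x) s
                 = (vj * s + lam * (v1 + v2) * s ^ 2 / 2) / (1 + lam * s)).
    { intros s Hs. unfold p_int. fold vj. rewrite RInt_id. field. split; intro; nra. }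
    rewrite Hp by lra. f_equal. f_equal.
    apply RInt_ext. rewrite Hmin, Hmax. intros s Hs. rewrite Hp by lra. reflexivity.
  - rewrite <- (EX2_main lam xi v1 v2 vj vo t Hl Hx Ht Hv _ HG).
    unfold EX2, ptilde_int. fold vj.
    assert (Hp : forall s, 0 <= s -> p_int lam v1 v2 j (fun x => x ^ 2) s
                 = ((vj * s) ^ 2 + lam * (v1 ^ 2 + v1 * v2 + v2 ^ 2) * s ^ 3 / 3) / (1 + lam * s)).
    { intros s Hs. unfold p_int. fold vj. rewrite RInt_sq. field. split; intro; nra. }
    rewrite Hp by lra. f_equal. f_equal.
    apply RInt_ext. rewrite Hmin, Hmax. intros s Hs. rewrite Hp by lra. reflexivity.
Qed.
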